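(* Let $\mathcal{D}$ be a probability distribution on $\mathcal{X}\times\mathcal{Y}$ with $\mathcal{Y}=\{1,\dots,K\}$, and let $\rho$ be a probability distribution over classifiers $h:\mathcal{X}\to\mathcal{Y}$. Let $W_\rho=W_\rho(X,Y)=\mathbb{E}_{h\sim\rho}[\mathbb{1}(h(X)\neq Y)]$ for $(X,Y)\sim\mathcal{D}$, and $\bar W_\rho=1-W_\rho$. Suppose $\rho$ is competent, i.e. for every $0\le t\le 1/2$, $$\mathbb{P}_{\mathcal{D}}\big(W_\rho\in[t,1/2)\big)\;\ge\;\mathbb{P}_{\mathcal{D}}\big(W_\rho\in[1/2,1-t]\big).$$ Then for any increasing function $h:[0,1]\to\mathbb{R}$ with $h(0)=0$, $$\mathbb{E}_{\mathcal{D}}\big[h(W_\rho)\mathbb{1}_{W_\rho<1/2}\big]\;\ge\;\mathbb{E}_{\mathcal{D}}\big[h(\bar W_\rho)\mathbb{1}_{\bar W_\rho\le 1/2}\big].$$ *)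

(* Defs.v *)
From HB Require Import structures.
From mathcomp Require Import all_boot all_order all_algebra.
From mathcomp Require Import all_classical all_reals all_analysis.
Set Implicit Arguments. Unset Strict Implicit. Unset Printing Implicit Defensive.
Import Order.TTheory GRing.Theory Num.Theory.
Local Open Scope classical_set_scope.
Local Open Scope ring_scope.

(* The label set Y = {1,...,K}: [label n] is 'I_n.+1, i.e. K = n+1 labels
   (represented 0..n), with the discrete sigma-algebra.  Measurable types
   must be pointed, hence the n.+1 (K = 0 is vacuous: no distribution
   exists on X x {}). *)
Definition label (n : nat) : Type := 'I_n.+1.
HB.instance Definition _ n := Finite.on (label n).
HB.instance Definition _ n := isPointed.Build (label n) ord0.
HB.instance Definition _ K := @isMeasurable.Build default_measure_display
  (label K) discrete_measurable discrete_measurable0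
  discrete_measurableC discrete_measurableU.

Definition Wrho (R : realType) (dH d : measure_display) (H : measurableType dH)
  (X : measurableType d) (K : nat) (rho : probability H R)
  (ev : H -> X -> label K) (z : X * label K) : R :=
  fine (\int[rho]_h (\1_[set h' | ev h' z.1 != z.2] h)%:E).

(* Main.v *)
Set Warnings "-all".
Require Import Defs.
From HB Require Import structures.
From mathcomp Require Import all_boot all_order all_algebra.
From mathcomp Require Import all_classical all_reals all_analysis.
From mathcomp Require Import measurable_realfun lra.
Import Order.TTheory GRing.Theory Num.Theory.
Local Open Scope classical_set_scope.
Local Open Scope ring_scope.

Definition clamp {R : realType} (x : R) : R := if x < 0 then 0 else if x <= 1 then x else 1.

Lemma clamp01 (R : realType) (x : R) : 0 <= clamp x <= 1.
Proof. rewrite /clamp; have [h|h] := ltP x 0; have [h'|h'] := leP x 1; apply/andP; split; lra. Qed.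

Lemma clampE (R : realType) (x : R) : 0 <= x -> x <= 1 -> clamp x = x.
Proof. rewrite /clamp => h0 h1; have [h|h] := ltP x 0; have [h'|h'] := leP x 1; lra. Qed.

Lemma clamp_mono (R : realType) (x y : R) : x <= y -> clamp x <= clamp y.
Proof.
rewrite /clamp => xy; have [h|h] := ltP x 0; have [h'|h'] := leP x 1;
  have [k|k] := ltP y 0; have [k'|k'] := leP y 1; lra.
Qed.

Lemma gc_meas (R : realType) (g : R -> R)
  (g_incr : forall x y : R, 0 <= x -> x <= y -> y <= 1 -> g x <= g y) :
  measurable_fun setT (fun x => g (clamp x)).
Proof.
apply: nondecreasing_measurable => // x y xy.
have := clamp01 _ x; have := clamp01 _ y; have := clamp_mono _ _ _ xy.
move=> h /andP[h1 h2] /andP[h3 h4]; exact: g_incr.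
Qed.

Lemma boolR_indic (R : realType) T (b : T -> bool) z :
  (b z)%:R = \1_[set z | b z] z :> R.
Proof.
rewrite indicE; case: (boolP (b z)) => h.
  by rewrite mem_set.
by rewrite memNset //= => h'; move: h; rewrite h'.
Qed.

Section W.
Context (R : realType) (d dH : measure_display)
  (X : measurableType d) (n : nat) (H : measurableType dH)
  (rho : probability H R) (ev : H -> X -> label n)
  (ev_meas : measurable [set p : H * (X * label n) | ev p.1 p.2.1 != p.2.2]).

Let E := [set p : H * (X * label n) | ev p.1 p.2.1 != p.2.2].

Lemma ysecE z : ysection E z = [set h | ev h z.1 != z.2].
Proof. by rewrite ysectionE. Qed.

Lemma WrhoE z : (Wrho rho ev z)%:E = rho [set h | ev h z.1 != z.2].
Proof.
have mE : measurable [set h | ev h z.1 != z.2].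
  by rewrite -ysecE; exact: measurable_ysection.
by rewrite /Wrho integral_indic // setIT fineK // fin_num_measure.
Qed.

Lemma Wrho_ge0 z : 0 <= Wrho rho ev z.
Proof. by rewrite -lee_fin WrhoE measure_ge0. Qed.

Lemma Wrho_le1 z : Wrho rho ev z <= 1.
Proof. by rewrite -lee_fin WrhoE probability_le1 // -ysecE; exact: measurable_ysection. Qed.

Lemma Wrho_meas : measurable_fun setT (Wrho rho ev).
Proof.
apply/measurable_EFinP.
have -> : (EFin \o Wrho rho ev) = (rho \o ysection E).
  by apply/funext => z /=; rewrite WrhoE ysecE.
exact: measurable_fun_ysection.
Qed.
End W.

Lemma mset_ltr (R : realType) d (T : measurableType d) (f g : T -> R) :
  measurable_fun setT f -> measurable_fun setT g -> measurable [set x | f x < g x].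
Proof.
move=> mf mg.
have mt : measurable [set true] by [].
have := measurable_fun_ltr mf mg measurableT mt.
rewrite setTI; congr measurable; apply/seteqP; split => x /=; by [].
Qed.

Lemma mset_ler (R : realType) d (T : measurableType d) (f g : T -> R) :
  measurable_fun setT f -> measurable_fun setT g -> measurable [set x | f x <= g x].
Proof.
move=> mf mg.
have mt : measurable [set true] by [].
have := measurable_fun_ler mf mg measurableT mt.
rewrite setTI; congr measurable; apply/seteqP; split => x /=; by [].
Qed.

Section cake.
Local Open Scope ereal_scope.
Context (R : realType) d (T : measurableType d) (P : probability T R).



Lemma mcake (f : T -> R) : measurable_fun setT f ->
  measurable [set p : T * R | (0 <= p.2 < f p.1)%R].
Proof.
move=> mf; set A := [set p : T * R | (0 <= p.2 < f p.1)%R].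
  have -> : A = [set p : T * R | (0 <= p.2)%R] `&` [set p | (p.2 < f p.1)%R].
    apply/seteqP; split => p /=; first by move/andP.
    by move=> [H1 H2]; apply/andP.
  apply: measurableI.
    apply: (@mset_ler R _ _ (cst 0%R) snd) => //; exact: measurable_snd.
  apply: (@mset_ltr R _ _ snd (f \o fst)); first exact: measurable_snd.
  apply: measurableT_comp => //; exact: measurable_fst.
Qed.

Lemma layer_cake (f : T -> R) : measurable_fun setT f -> (forall x, (0 <= f x)%R) ->
  \int[P]_x (f x)%:E =
  \int[lebesgue_measure]_s P (ysection [set p : T * R | (0 <= p.2 < f p.1)%R] s).
Proof.
move=> mf f0.
set A := [set p : T * R | (0 <= p.2 < f p.1)%R].
have mA : measurable A by exact: mcake.
have mI : measurable_fun setT (EFin \o (\1_A : T * R -> R)).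
  by apply/measurable_EFinP; exact: measurable_indic.
transitivity (\int[P]_x \int[lebesgue_measure]_s (\1_A (x, s))%:E).
  apply: eq_integral => x _.
  rewrite (_ : (fun s => (\1_A (x, s))%:E) = (fun s => (\1_(xsection A x) s)%:E)); last first.
    by apply/funext => s; rewrite !indicE mem_xsection.
  rewrite integral_indic //; last exact: measurable_xsection.
  rewrite setIT.
  have -> : xsection A x = [set` `[0%R, f x[].
    rewrite xsectionE; apply/seteqP; split => s /=; by rewrite in_itv.
  have h := lebesgue_measure_itv `[0%R, f x[.
  apply: esym; apply: etrans h _; rewrite /= lte_fin.
  have [fx0|] := ltP 0%R (f x); first by rewrite sube0.
  by rewrite le_eqVlt ltNge f0 orbF => /eqP ->.
have A0 : forall p, 0 <= (EFin \o (\1_A : T * R -> R)) p.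
  by move=> p; rewrite /= lee_fin indicE.
have FT := @fubini_tonelli _ _ _ _ R P lebesgue_measure (EFin \o (\1_A : T * R -> R)) mI A0.
rewrite /= in FT; apply: (etrans FT).
apply: eq_integral => s _.
rewrite (_ : (fun x => (\1_A (x, s))%:E) = (fun x => (\1_(ysection A s) x)%:E)); last first.
  by apply/funext => x; rewrite !indicE mem_ysection.
by rewrite integral_indic ?setIT //; exact: measurable_ysection.
Qed.

Lemma cake_cmp (f1 f2 : T -> R) : measurable_fun setT f1 -> measurable_fun setT f2 ->
  (forall x, (0 <= f1 x)%R) -> (forall x, (0 <= f2 x)%R) ->
  (forall s, (0 <= s)%R -> P [set x | (s < f1 x)%R] <= P [set x | (s < f2 x)%R]) ->
  \int[P]_x (f1 x)%:E <= \int[P]_x (f2 x)%:E.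
Proof.
move=> mf1 mf2 f10 f20 Hs.
rewrite (layer_cake _ mf1 f10) (layer_cake _ mf2 f20).
apply: ge0_le_integral => //.
- have h := measurable_fun_ysection P (mcake _ mf1); exact h.
- have h := measurable_fun_ysection P (mcake _ mf2); exact h.
move=> s _; rewrite /ysection /=.
have [s0|s0] := leP 0%R s.
  have := Hs s s0; congr (P _ <= P _); apply/seteqP; split => x /=;
    rewrite inE /= s0 //.
have -> : [set x | (x, s) \in [set p : T * R | (0 <= p.2 < f1 p.1)%R]] = set0.
  by apply/seteqP; split => x //=; rewrite inE /= leNgt s0.
by rewrite measure0 measure_ge0.
Qed.
End cake.
Lemma setI_andb T (p q : T -> bool) :
  [set z | p z && q z] = [set z | p z] `&` [set z | q z].
Proof.
apply/seteqP; split => z /=; first by move/andP.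
by move=> [H1 H2]; apply/andP.
Qed.

Section key.
Local Open Scope ereal_scope.
Context (R : realType) d (T : measurableType d) (P : probability T R)
  (w : T -> R) (mw : measurable_fun setT w)
  (w0 : forall z, (0 <= w z)%R) (w1 : forall z, (w z <= 1)%R)
  (comp : forall t : R, (0 <= t)%R -> (t <= 1/2)%R ->
     P [set z | (1/2 <= w z <= 1 - t)%R] <= P [set z | (t <= w z < 1/2)%R]).

Lemma mLt (c1 c2 : R) : measurable [set z | (c1 <= w z <= c2)%R].
Proof.
rewrite setI_andb; apply: measurableI.
  exact: (@mset_ler R _ _ (cst c1) w).
exact: (@mset_ler R _ _ w (cst c2)).
Qed.

Lemma mRt (c1 c2 : R) : measurable [set z | (c1 <= w z < c2)%R].
Proof.
rewrite setI_andb; apply: measurableI.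
  exact: (@mset_ler R _ _ (cst c1) w).
exact: (@mset_ltr R _ _ w (cst c2)).
Qed.

Lemma comp' (t : R) : (0 <= t)%R ->
  P [set z | (1/2 <= w z <= 1 - t)%R] <= P [set z | (t <= w z < 1/2)%R].
Proof.
move=> t0; have [th|th] := leP t (1/2)%R; first exact: comp.
have -> : [set z | (1/2 <= w z <= 1 - t)%R] = set0.
  apply/seteqP; split => z //= /andP[h1 h2]; lra.
by rewrite measure0 measure_ge0.
Qed.

Lemma key (S : set R)
  (Sup : forall x y, S x -> (x <= y)%R -> (y <= 1/2)%R -> S y)
  (S0 : forall x, S x -> (0 <= x)%R)
  (mR : measurable [set z | (w z < 1/2)%R /\ S (w z)]) :
  P [set z | (1/2 <= w z)%R /\ S (1 - w z)%R] <= P [set z | (w z < 1/2)%R /\ S (w z)].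
Proof.
have [[x0 Sx0]|Sn] := pselect (exists x, S x); last first.
  have -> : [set z | (1/2 <= w z)%R /\ S (1 - w z)%R] = set0.
    by apply/seteqP; split => z //= [_ h]; apply: Sn; exists (1 - w z)%R.
  by rewrite measure0 measure_ge0.
have lbS : lbound S 0%R by move=> x /S0.
have hinf : has_inf S by split; [exists x0 | exists 0%R].
set a := inf S.
have a0 : (0 <= a)%R by apply: lb_le_inf => //; exists x0.
have aS x : S x -> (a <= x)%R by move=> Sx; apply: ge_inf => //; exists 0%R.
have gtS x : (a < x)%R -> (x <= 1/2)%R -> S x.
  move=> ax x12; have [y Sy yx] := inf_adherent (ltac:(by rewrite subr_gt0) : (0 < x - a)%R) hinf.
  by apply: (Sup y) => //; rewrite -/a in yx; apply: ltW; move: yx; rewrite addrC subrK.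
have [Sa|Sa] := pselect (S a).
  have -> : [set z | (1/2 <= w z)%R /\ S (1 - w z)%R] = [set z | (1/2 <= w z <= 1 - a)%R].
    apply/seteqP; split => z /=.
      move=> [h1 h2]; have := aS _ h2; move=> h3; apply/andP; split => //; lra.
    move/andP => [h1 h2]; split => //; apply: (Sup a) => //; lra.
  apply: (le_trans (comp' _ a0)); apply: le_measure; rewrite ?inE //; first exact: mRt.
  move=> z /= /andP[h1 h2]; split => //; apply: (Sup a) => //; lra.
pose t (k : nat) := (a + k.+1%:R^-1)%R.
have t_gt k : (a < t k)%R by rewrite /t ltrDl invr_gt0.
pose L k := [set z | (1/2 <= w z <= 1 - t k)%R].
have -> : [set z | (1/2 <= w z)%R /\ S (1 - w z)%R] = \bigcup_k L k.
  apply/seteqP; split => z /=.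
    move=> [h1 h2]; have h3 := aS _ h2.
    have h4 : (a < 1 - w z)%R by rewrite lt_neqAle h3 andbT; apply/eqP => e; apply: Sa; rewrite e.
    have [k hk] := ltr_add_invr h4; exists k => //=; apply/andP; split => //; rewrite /t; set e := (k.+1%:R^-1)%R in hk *; lra.
  move=> [k _ /= /andP[h1 h2]]; split => //; apply: gtS; last lra.
  have := t_gt k; lra.
have mL k : measurable (L k) by exact: mLt.
have ndL : nondecreasing_seq L.
  move=> k m km; apply/subsetPset => z /= /andP[h1 h2]; apply/andP; split => //.
  apply: (le_trans h2); rewrite /t; have : (m.+1%:R^-1 <= k.+1%:R^-1 :> R)%R by rewrite lef_pV2 ?posrE // ler_nat ltnS.
  set e1 := (m.+1%:R^-1)%R; set e2 := (k.+1%:R^-1)%R; lra.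
have := @nondecreasing_cvg_mu _ _ _ P L mL (bigcupT_measurable L mL) ndL.
move/cvge_to_le; apply; apply: nearW => k /=.
apply: (le_trans (comp' _ (ltW (le_lt_trans a0 (t_gt k))))).
apply: le_measure; rewrite ?inE //; first exact: mRt.
move=> z /= /andP[h1 h2]; split => //; apply: gtS; last lra.
have := t_gt k; lra.
Qed.
End key.

Theorem lemma2 (R : realType) (d dH : measure_display)
  (X : measurableType d) (n : nat) (H : measurableType dH)
  (D : probability (X * label n)%type R) (rho : probability H R)
  (ev : H -> X -> label n)
  (ev_meas : measurable [set p : H * (X * label n) | ev p.1 p.2.1 != p.2.2])
  (competent : forall t : R, 0 <= t -> t <= 1/2 ->
     (D [set z | (1/2 <= Wrho rho ev z <= 1 - t)%R]
       <= D [set z | (t <= Wrho rho ev z < 1/2)%R])%E)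
  (g : R -> R)
  (g_incr : forall x y : R, 0 <= x -> x <= y -> y <= 1 -> g x <= g y)
  (g0 : g 0 = 0) :
  (\int[D]_z (g (1 - Wrho rho ev z) * ((1 - Wrho rho ev z <= 1/2)%R)%:R)%R%:E
   <= \int[D]_z (g (Wrho rho ev z) * ((Wrho rho ev z < 1/2)%R)%:R)%R%:E)%E.
Proof.
have mw := @Wrho_meas R d dH X n H rho ev ev_meas.
have w0 := @Wrho_ge0 R d dH X n H rho ev ev_meas.
have w1 := @Wrho_le1 R d dH X n H rho ev ev_meas.
set w := Wrho rho ev in mw w0 w1 competent *.
have mg := @gc_meas R g g_incr.
have g_ge0 x : 0 <= x -> x <= 1 -> 0 <= g x.
  by move=> x0 x1; rewrite -g0; apply: g_incr.
have mf1 : measurable_fun setT (fun z => g (1 - w z) * ((1 - w z <= 1/2)%R)%:R).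
  rewrite (_ : (fun z => _) = (fun z => g (clamp (1 - w z)) * \1_[set z | 1 - w z <= 1/2] z)); last first.
    apply/funext => z; rewrite boolR_indic clampE //; have := w0 z; have := w1 z; lra.
  apply: measurable_funM.
    apply: (measurableT_comp mg); apply: measurable_funB => //.
  apply: measurable_indic; apply: (@mset_ler R _ _ (fun z => 1 - w z) (cst (1/2))) => //.
  by apply: measurable_funB.
have mf2 : measurable_fun setT (fun z => g (w z) * ((w z < 1/2)%R)%:R).
  rewrite (_ : (fun z => _) = (fun z => g (clamp (w z)) * \1_[set z | w z < 1/2] z)); last first.
    by apply/funext => z; rewrite boolR_indic clampE.
  apply: measurable_funM.
    exact: (measurableT_comp mg).
  by apply: measurable_indic; apply: (@mset_ltr R _ _ w (cst (1/2))).
apply: (@cake_cmp R _ _ D _ _ mf1 mf2).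
- move=> z; case: (boolP (1 - w z <= 1/2)) => h; rewrite ?mulr1 ?mulr0 //.
  apply: g_ge0; have := w0 z; have := w1 z; lra.
- move=> z; case: (boolP (w z < 1/2)) => h; rewrite ?mulr1 ?mulr0 //.
  apply: g_ge0 => //; have := w0 z; have := w1 z; lra.
move=> s s0.
pose S := [set x : R | 0 <= x /\ s < g x].
have E1 : [set z | s < g (1 - w z) * ((1 - w z <= 1/2)%R)%:R] =
          [set z | 1/2 <= w z /\ S (1 - w z)].
  apply/seteqP; split => z /=.
    case: (boolP (1 - w z <= 1/2)) => h; rewrite ?mulr1 ?mulr0.
      move=> hs; split; first lra.
      split => //; have := w1 z; lra.
    lra.
  move=> [h1 [h2 h3]]; have -> : (1 - w z <= 1/2) by lra.
  by rewrite mulr1.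
have E2 : [set z | s < g (w z) * ((w z < 1/2)%R)%:R] =
          [set z | w z < 1/2 /\ S (w z)].
  apply/seteqP; split => z /=.
    case: (boolP (w z < 1/2)) => h; rewrite ?mulr1 ?mulr0; last lra.
    by move=> hs; split => //; split.
  by move=> [h1 [h2 h3]]; rewrite h1 mulr1.
rewrite E1 E2.
apply: (@key R _ _ D w mw competent S).
- move=> x y [x0 sx] xy y12; split; first exact: le_trans xy.
  apply: (lt_le_trans sx); apply: g_incr => //; lra.
- by move=> x [].
- rewrite -E2; have := @mset_ltr R _ _ (cst s) _ (measurable_cst _) mf2; exact.
Qed.
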